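(* In the continuous Donation Game, let $0\le\gamma\le b(K)-c(K)$, suppose $\lambda\ge c(K)/b(K)$, and let $p_0\in[0,1]$ satisfy $$\frac{\gamma-\lambda b(K)+c(K)}{(1-\lambda)b(K)}\le p_0\le\frac{\gamma}{(1-\lambda)b(K)}.$$ Define, for $x\in\{0,K\}$ and $y\in[0,K]$, $p(x,y)=\frac{1}{\lambda}\left(\frac{c(y)+\gamma}{b(K)}-(1-\lambda)p_0\right)$. Then $p(x,y)\in[0,1]$, and the memory-one strategy for $X$ with $\sigma_X^0=(1-p_0)\delta_0+p_0\delta_K$ and $\sigma_X[x,y]=(1-p(x,y))\delta_0+p(x,y)\delta_K$ enforces $\pi_Y=\gamma$ against every behavioral strategy of $Y$.
   Context: Continuous Donation Game: fix $K>0$ and measurable nondecreasing functions $b,c:[0,K]\to\mathbb{R}$ with $b(0)=c(0)=0$ and $b(s)>c(s)$ for $s>0$. Action spaces $S_X=S_Y=[0,K]$, payoffs $u_X(x,y)=b(y)-c(x)$, $u_Y(x,y)=b(x)-c(y)$, discount factor $\lambda\in(0,1)$. Repeated-game framework: histories $\mathcal{H}=\bigsqcup_T(S_X\times S_Y)^T$; a behavioral strategy is a Markov kernel from histories to the player's action space; a memory-one strategy for $X$ consists of an initial probability measure $\sigma_X^0$ and a Markov kernel $\sigma_X[x,y]$ applied to the previous action pair. The strategies generate, via $\mu_0=\sigma_X[\varnothing]\otimes\sigma_Y[\varnothing]$ and $\mu_t(E'\times E)=\int_{E'}(\sigma_X[h]\otimes\sigma_Y[h])(E)\,d\mu_{t-1}(h)$,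 the laws $\nu_t(E)=\mu_t(\mathcal{H}^t\times E)$ of the action pair at time $t$, and $\pi_X=(1-\lambda)\sum_t\lambda^t\int u_X\,d\nu_t$, $\pi_Y=(1-\lambda)\sum_t\lambda^t\int u_Y\,d\nu_t$. $\delta_s$ is the Dirac measure at $s$. *)

(* Defs.v *)
From HB Require Import structures.
From mathcomp Require Import all_boot all_order all_algebra.
From mathcomp Require Import all_classical all_reals all_analysis.
Set Implicit Arguments. Unset Strict Implicit. Unset Printing Implicit Defensive.
Import Order.TTheory GRing.Theory Num.Theory.
Local Open Scope classical_set_scope.
Local Open Scope ring_scope.

Record mtype := MType { mdisp : measure_display; mcar :> measurableType mdisp }.

Section Hist.
Variable R : realType.
Fixpoint hist (t : nat) : mtype :=
  match t with
  | 0 => @MType _ (R * R)%type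
  | t.+1 => @MType _ (mcar (hist t) * (R * R))%type
  end.

Definition lastp (t : nat) : hist t -> (R * R)%type :=
  match t with 0 => fun h => h | t.+1 => fun h => h.2 end.
End Hist.

(* Histories of length t+1 are elements of  hist R t, a nested product *)
(* ((..((R*R) * (R*R)) ..) * (R*R)) with the product (Borel) sigma-    *)
(* algebra; lastp h is the most recent action pair (x,y) of h.         *)

Section DonationGame.
Variable R : realType.
Local Open Scope ereal_scope.

Definition on0K (K : R) (f : R -> R) (x : R) : R :=
  if x \in `[0, K]%R then f x else 0%R.

Definition uY (K : R) (b c : R -> R) (xy : R * R) : R :=
  (on0K K b xy.1 - on0K K c xy.2)%R.

Record behY (K : R) := BehY {
  sY0 : probability R R ;
  sY : forall t : nat, R.-pker (mcar (hist R t)) ~> R ;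
  sY0_supp : sY0 `[0%R, K]%classic = 1 ;
  sY_supp : forall t (h : hist R t), sY t h `[0%R, K]%classic = 1 }.

(* mu : forall t, measure on histories of length t+1, is the law of play
   generated by X's memory-one strategy (sX0, sXm) and Y's strategy sy:
   mu_0 = sX0 (x) sY0 and
   mu_t (E' x E) = \int_{E'} (sigma_X[h] (x) sigma_Y[h])(E) d mu_{t-1}(h),
   stated on measurable rectangles E = A x B (which determines the product
   measure sigma_X[h] (x) sigma_Y[h]). *)
Definition play_law (K : R) (sX0 : set R -> \bar R)
    (sXm : R * R -> set R -> \bar R) (sy : behY K)
    (mu : forall t : nat, {measure set (mcar (hist R t)) -> \bar R}) : Prop :=
  (forall A B : set R, measurable A -> measurable B ->
     mu 0%N (A `*` B) = sX0 A * sY0 sy B) /\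
  (forall (t : nat) (E' : set (mcar (hist R t))) (A B : set R),
     measurable E' -> measurable A -> measurable B ->
     mu t.+1 (E' `*` (A `*` B)) =
       \int[mu t]_(h in E') (sXm (lastp h) A * sY sy t h B)).

Definition payoffY_is (K : R) (b c : R -> R) (lam : R)
    (mu : forall t : nat, {measure set (mcar (hist R t)) -> \bar R})
    (v : R) : Prop :=
  (fun n : nat => \sum_(0 <= t < n)
      (((1 - lam) * lam ^+ t)%R%:E *
       \int[mu t]_h (uY K b c (lastp h))%:E)) @ \oo --> v%:E.

Definition mix0K (K q : R) (A : set R) : \bar R :=
  (1 - q)%R%:E * @dirac _ R (0%R : R) R A + q%:E * @dirac _ R K R A.

Definition pZD (K : R) (b c : R -> R) (gam lam p0 : R) (x y : R) : R :=
  (lam^-1 * ((on0K K c y + gam) / b K - (1 - lam) * p0))%R.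

End DonationGame.

(* Main.v *)
Require Import Defs.
From HB Require Import structures.
From mathcomp Require Import all_boot all_order all_algebra.
From mathcomp Require Import all_classical all_reals all_analysis.
From mathcomp Require Import measurable_realfun.
From mathcomp Require Import ring lra.
Import Order.TTheory GRing.Theory Num.Theory.
Local Open Scope classical_set_scope.
Local Open Scope ring_scope.

Section H.
Variable R : realType.
Local Open Scope ereal_scope.
Lemma dist_int d (T : measurableType d) (m : {measure set T -> \bar R})
  (g : T -> R) (mg : measurable_fun setT g) (K q : R) (hq : (0 <= q <= 1)%R)
  (hd : forall A, measurable A -> m (g @^-1` A) = mix0K K q A)
  (f : R -> R) (mf : measurable_fun setT f) (f0 : forall x, (0 <= f x)%R) :
  \int[m]_x (f (g x))%:E = ((1 - q) * f 0 + q * f K)%:E.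
Proof.
have h1 : (0 <= 1 - q)%R by case/andP: hq => _; rewrite subr_ge0.
have h2 : (0 <= q)%R by case/andP: hq.
have mEf : measurable_fun [set: R] (fun x : R => (f x)%:E) by exact/measurable_EFinP.
transitivity (\int[pushforward m g]_(x in setT) (f x)%:E).
  rewrite [RHS]ge0_integral_pushforward //= ?preimage_setT //.
by move=> y _; rewrite lee_fin.
rewrite (eq_measure_integral (measure_add (mscale (NngNum h1) \d_(0%R : R))
   (mscale (NngNum h2) \d_K))); last first.
  move=> A mA _; transitivity (m (g @^-1` A)); first by [].
  rewrite hd //; apply/esym; apply: etrans (measure_addE (mscale (NngNum h1) \d_(0%R:R)) (mscale (NngNum h2) \d_K) A) _; by [].
rewrite ge0_integral_measure_add //.
rewrite (@ge0_integral_mscale _ R R \d_(0%R:R) setT measurableT (NngNum h1)); last 2 first.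
- by [].
- by move=> x _; rewrite lee_fin.
rewrite (@ge0_integral_mscale _ R R \d_K setT measurableT (NngNum h2)); last 2 first.
- by [].
- by move=> x _; rewrite lee_fin.
rewrite !integral_dirac //= !diracT !mul1e.
by rewrite -!EFinM -EFinD.
by move=> x _; rewrite lee_fin.
Qed.

Lemma bnd_int d (T : measurableType d) (m : {measure set T -> \bar R})
  (m1 : m setT = 1%E) (f : T -> R) (mf : measurable_fun setT f) (M : R)
  (hf : forall x, (`|f x| <= M)%R) : m.-integrable setT (EFin \o f).
Proof.
apply: measurable_bounded_integrable => //; first by rewrite m1 ltry.
exists M; split; first by rewrite num_real.
by move=> N hN x _; apply: le_trans (hf x) (ltW hN).
Qed.

Lemma int_affine d (T : measurableType d) (m : {measure set T -> \bar R})
  (m1 : m setT = 1%E) (f : T -> R) (mf : measurable_fun setT f) (M : R)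
  (hf : forall x, (`|f x| <= M)%R) (a b : R) :
  \int[m]_x (a + b * f x)%:E = (a + b * fine (\int[m]_x (f x)%:E))%:E.
Proof.
have fi := @bnd_int _ _ m m1 f mf M hf.
have fin := integrable_fin_num measurableT fi.
under eq_integral do rewrite EFinD EFinM.
rewrite integralD //; last 2 first.
- apply: (@bnd_int _ _ m m1 (fun _ => a) (measurable_cst _) `|a|) => x //.
- apply: integrableZl => //.
rewrite integral_cst // m1 mule1 integralZl //.
by rewrite -[X in (_ * X)%E](@fineK _ (\int[m]_(x in setT) (EFin \o f) x)).
Qed.
Local Close Scope ereal_scope.
Lemma lastp_mes t : measurable_fun setT (@lastp R t).
Proof. by case: t => [|t] /=; [exact: measurable_id | exact: measurable_snd]. Qed.

Lemma on0K_mes (K : R) (f : R -> R) : measurable_fun `[0, K]%classic f ->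
  measurable_fun setT (on0K K f).
Proof.
move=> mf; have -> : on0K K f = @patch R R (fun=> 0) (`[0, K]%classic) f.
  apply/funext => x; rewrite /on0K /patch.
  by congr (if _ then _ else _); apply/idP/idP; rewrite inE /=.
by apply/(measurable_restrictT f) => //.
Qed.

End H.

Theorem mainTheorem10 (R : realType) (K : R) (b c : R -> R) (lam gam p0 : R)
  (hK : 0 < K)
  (hbm : measurable_fun `[0, K]%classic b)
  (hcm : measurable_fun `[0, K]%classic c)
  (hbmono : {in `[0, K] &, {homo b : x y / x <= y}})
  (hcmono : {in `[0, K] &, {homo c : x y / x <= y}})
  (hb0 : b 0 = 0) (hc0 : c 0 = 0)
  (hbc : forall s, 0 < s <= K -> c s < b s)
  (hlam : 0 < lam < 1)
  (hgam : 0 <= gam <= b K - c K)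
  (hlamK : c K / b K <= lam)
  (hp01 : 0 <= p0 <= 1)
  (hp0lo : (gam - lam * b K + c K) / ((1 - lam) * b K) <= p0)
  (hp0hi : p0 <= gam / ((1 - lam) * b K)) :
  (forall x y : R, (x = 0 \/ x = K) -> 0 <= y <= K ->
     0 <= pZD K b c gam lam p0 x y <= 1) /\
  (forall (sy : behY K)
          (mu : forall t : nat, {measure set (mcar (hist R t)) -> \bar R}),
     play_law (mix0K K p0)
       (fun xy => mix0K K (pZD K b c gam lam p0 xy.1 xy.2)) sy mu ->
     payoffY_is K b c lam mu gam).
Proof.
have [lam0 lam1] : (0 < lam)%R /\ (lam < 1)%R by case/andP: hlam.
have K0 : 0 \in `[0, K] by rewrite in_itv /= lexx ltW.
have KK : K \in `[0, K] by rewrite in_itv /= lexx ltW.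
have cK0 : 0 <= c K by rewrite -hc0; apply: hcmono => //; exact: ltW.
have bKc : c K < b K by apply: hbc; rewrite hK lexx.
have bK0 : 0 < b K by exact: le_lt_trans cK0 bKc.
have Cb : forall y, 0 <= on0K K c y <= c K.
  move=> y; rewrite /on0K; case: ifPn => hy; last by rewrite lexx cK0.
  have := hy; rewrite in_itv /= => /andP[y0 yK].
  by rewrite -{1}hc0; apply/andP; split; apply: hcmono.
have Bb : forall x, 0 <= on0K K b x <= b K.
  move=> y; rewrite /on0K; case: ifPn => hy; last by rewrite lexx ltW.
  have := hy; rewrite in_itv /= => /andP[y0 yK].
  by rewrite -{1}hb0; apply/andP; split; apply: hbmono.
have lb0 : 0 < (1 - lam) * b K by rewrite mulr_gt0 // subr_gt0.
have hhi : p0 * ((1 - lam) * b K) <= gam by rewrite -ler_pdivlMr.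
have hlo : gam - lam * b K + c K <= p0 * ((1 - lam) * b K) by rewrite -ler_pdivrMr.
have pb : forall u, 0 <= u <= c K ->
    0 <= lam^-1 * ((u + gam) / b K - (1 - lam) * p0) <= 1.
  move=> u /andP[u0 uK]; rewrite mulrC; apply/andP; split.
    apply: divr_ge0; last exact: ltW.
    rewrite subr_ge0 ler_pdivlMr //; lra.
  rewrite ler_pdivrMr // mul1r lerBlDr ler_pdivrMr //; lra.
split.
  by move=> x y _ hy; rewrite /pZD; apply: pb; exact: Cb.
move=> sy mu [h0 hS].
pose X t (h : mcar (hist R t)) := (lastp h).1.
pose Y t (h : mcar (hist R t)) := (lastp h).2.
have mX t : measurable_fun setT (X t).
  by apply: measurableT_comp; [exact: measurable_fst | exact: lastp_mes].
have mY t : measurable_fun setT (Y t).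
  by apply: measurableT_comp; [exact: measurable_snd | exact: lastp_mes].
have mC : measurable_fun setT (on0K K c) := @on0K_mes R K c hcm.
have mB : measurable_fun setT (on0K K b) := @on0K_mes R K b hbm.
have mCY t : measurable_fun setT (fun h => on0K K c (Y t h)).
  exact: measurableT_comp mC (mY t).
have CYb t (h : mcar (hist R t)) : `|on0K K c (Y t h)| <= c K.
  by have /andP[h1 h2] := Cb (Y t h); rewrite ger0_norm.
pose al := lam^-1 * (gam / b K - (1 - lam) * p0).
pose be := lam^-1 / b K.
have pE : forall x y, pZD K b c gam lam p0 x y = al + be * on0K K c y.
  by move=> x y; rewrite /pZD /al /be; ring.
have mixT q : mix0K K q setT = 1%E.
  by rewrite /mix0K !diracT !mule1 -EFinD subrK.
have mass : forall t, mu t setT = 1%E.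
  elim=> [|t IH].
    by rewrite -setXTT h0 // mixT probability_setT mule1.
  have -> : [set: mcar (hist R t.+1)] = setT `*` (setT `*` setT) by rewrite !setXTT.
  rewrite hS //; under eq_integral do rewrite mixT prob_kernel mule1.
  by rewrite integral_cst // IH mule1.
pose Ct t := fine (\int[mu t]_h (on0K K c (Y t h))%:E).
have Ctfin t : (\int[mu t]_h (on0K K c (Y t h))%:E = (Ct t)%:E)%E.
  rewrite /Ct fineK //.
  exact: (integrable_fin_num measurableT (@bnd_int _ _ _ (mu t) (mass t) _ (mCY t) _ (CYb t))).
have Ctb t : 0 <= Ct t <= c K.
  apply/andP; split; rewrite -lee_fin -Ctfin.
    by apply: integral_ge0 => h _; rewrite lee_fin; case/andP: (Cb (Y t h)).
  have -> : (c K)%:E = (\int[mu t]_h (c K)%:E)%E by rewrite integral_cst // mass mule1.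
  apply: le_integral => //.
  - exact: (@bnd_int _ _ _ (mu t) (mass t) _ (mCY t) _ (CYb t)).
  - exact: (@bnd_int _ _ _ (mu t) (mass t) (fun=> c K) (measurable_cst _) `|c K|).
  - by move=> h _; rewrite lee_fin; case/andP: (Cb (Y t h)).
pose q t := if t is t'.+1 then al + be * Ct t' else p0.
have q0 : q 0%N = p0 by [].
have qS t : q t.+1 = al + be * Ct t by [].
have qb t : 0 <= q t <= 1.
  case: t => [|t] //; rewrite qS.
  have -> : al + be * Ct t = lam^-1 * ((Ct t + gam) / b K - (1 - lam) * p0).
    by rewrite /al /be; ring.
  exact: pb.
have distX t A : measurable A -> mu t (X t @^-1` A) = mix0K K (q t) A.
  move=> mA; case: t => [|t].
    have -> : X 0%N @^-1` A = A `*` setT.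
      by apply/seteqP; split => [[x y]|[x y]] //= [].
    by rewrite h0 // probability_setT mule1.
  have -> : X t.+1 @^-1` A = setT `*` (A `*` setT).
    by apply/seteqP; split => [[h [x y]]|[h [x y]]] //= [_ []].
  rewrite hS //.
  pose a0 : R := ((0:R) \in A)%:R; pose aK : R := (K \in A)%:R.
  transitivity (\int[mu t]_h ((a0 + (aK - a0) * al) + ((aK - a0) * be) * on0K K c (Y t h))%:E)%E.
    apply: eq_integral => h _.
    rewrite prob_kernel mule1 /mix0K !diracE pE -!EFinM -EFinD.
    by congr EFin; rewrite /a0 /aK /Y; ring.
  rewrite (@int_affine R _ _ (mu t) (mass t) _ (mCY t) _ (CYb t)) -/(Ct t).
  rewrite /mix0K !diracE qS -!EFinM -EFinD.
  by congr EFin; rewrite /a0 /aK; ring.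
have Et t : (\int[mu t]_h (uY K b c (lastp h))%:E)%E = (b K * q t - Ct t)%:E.
  have mBX : measurable_fun setT (fun h => on0K K b (X t h)).
    exact: measurableT_comp mB (mX t).
  have BXb h : `|on0K K b (X t h)| <= b K.
    by have /andP[h1 h2] := Bb (X t h); rewrite ger0_norm.
  rewrite /uY; under eq_integral do rewrite EFinB.
  rewrite (@integralB_EFin _ _ R (mu t) setT (fun h => on0K K b (X t h))
     (fun h => on0K K c (Y t h))) //; last 2 first.
  - exact: (@bnd_int _ _ _ (mu t) (mass t) _ mBX _ BXb).
  - exact: (@bnd_int _ _ _ (mu t) (mass t) _ (mCY t) _ (CYb t)).
  rewrite Ctfin (@dist_int R _ _ (mu t) (X t) (mX t) K (q t) (qb t) (distX t)
     (on0K K b) mB (fun x => proj1 (andP (Bb x)))).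
  rewrite /on0K K0 KK hb0 -EFinB; congr EFin; ring.
have lamn0 : lam != 0 by rewrite lt0r_neq0.
have bKn0 : b K != 0 by rewrite lt0r_neq0.
have CtE t : Ct t = lam * b K * q t.+1 - gam + (1 - lam) * p0 * b K.
  rewrite qS /al /be.
  rewrite [RHS](_ : _ = (lam * lam^-1) * ((b K * (b K)^-1) * gam
     - b K * (1 - lam) * p0 + (b K * (b K)^-1) * Ct t) - gam
     + (1 - lam) * p0 * b K); last by ring.
  by rewrite !mulfV //; ring.
pose s n := \sum_(0 <= t < n) ((1 - lam) * lam ^+ t * (b K * q t - Ct t)).
pose D n := (1 - lam) * p0 * b K - gam - (1 - lam) * b K * q n.
have sE n : s n = gam + lam ^+ n * D n.
  elim: n => [|n IH]; first by rewrite /s /D big_geq // q0 expr0; ring.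
  rewrite /s big_nat_recr //= -/(s n) IH CtE /D exprS; ring.
suff H : (fun n => (s n)%:E) = (fun n : nat => \sum_(0 <= t < n)
      (((1 - lam) * lam ^+ t)%R%:E *
       \int[mu t]_h (uY K b c (lastp h))%:E))%E.
  rewrite /payoffY_is -H; apply: cvg_EFin; first by apply: nearW.
  have -> : fine \o (fun n => (s n)%:E) = s by [].
  have -> : s = (fun n => gam + lam ^+ n * D n) by apply/funext => n; exact: sE.
  pose M := (1 - lam) * p0 * b K + gam + (1 - lam) * b K.
  have DM n : - M <= D n <= M.
    have /andP[q0' q1'] := qb n.
    have h1 : 0 <= (1 - lam) * b K * q n by rewrite mulr_ge0 // ltW.
    have h2 : (1 - lam) * b K * q n <= (1 - lam) * b K by rewrite ler_piMr // ltW.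
    have h3 : 0 <= (1 - lam) * p0 * b K.
      apply: mulr_ge0; [apply: mulr_ge0|exact: ltW]; [by rewrite subr_ge0 ltW | by case/andP: hp01].
    have g0 : 0 <= gam by case/andP: hgam.
    rewrite /D /M; apply/andP; split; lra.
  have L : (fun n => lam ^+ n * M) @ \oo --> 0.
    rewrite -(mul0r M); apply: cvgMr_tmp; apply: cvg_expr.
    by rewrite ger0_norm ?ltW.
  apply: (@squeeze_cvgr _ _ _ _ (fun n => gam - lam ^+ n * M) (fun n => gam + lam ^+ n * M)).
  - apply: nearW => n /=; have /andP[l u] := DM n.
    have ln : 0 <= lam ^+ n by rewrite exprn_ge0 // ltW.
    by rewrite -mulrN !lerD2l !ler_wpM2l.
  - rewrite -[X in _ --> X]subr0; apply: cvgB => //; exact: cvg_cst.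
  - rewrite -[X in _ --> X]addr0; apply: cvgD => //; exact: cvg_cst.
apply/funext => n; rewrite /s -sumEFin; apply: eq_bigr => t _.
by rewrite Et -EFinM.
Qed.
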